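(* Let $G=(V,E)$ be an atomic bispanning graph, $v\in V$ of degree $3$ with neighbours $x,y,z$ and incident edges $e_x,e_y,e_z$, let $(a,b)\in\{(x,y),(x,z),(y,z)\}$, $c$ the remaining neighbour, and $G_{a,b}$ the reduction graph. Let $(e,f,S,T)$ be an arc of $\vec\tau_3(G_{a,b})$ with $e\neq e_{a,b}$ and $f\neq e_{a,b}$. If (1) $e_{a,b}\in S$ and $e\notin D_{G_{a,b}}(S,e_{a,b})\cap C_G(T+e_c,e_a)\cap C_G(T+e_c,e_b)$, or (2) $e_{a,b}\in T$ and $e\notin D_{G_{a,b}}(T,e_{a,b})\cap C_G(S+e_c,e_a)\cap C_G(S+e_c,e_b)$, then $(e,f,\rho_{e_{a,b},c}(S,T))$ is an arc of $\vec\tau_3(G)$. Conversely, for all $(S,T)\in V_{\tau(G_{a,b})}$ and all edges $e,f\neq e_{a,b}$: if $(e,f,S,T)$ is not an arc of $\vec\tau_3(G_{a,b})$, or if it is an arc but neither condition (1) nor condition (2) holds, then $(e,f,\rho_{e_{a,b},c}(S,T))$ is not an arc of $\vec\tau_3(G)$.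
   Context: Graphs are finite, undirected, possibly with parallel edges, no loops; $X+a=X\cup\{a\}$, $X-a=X\setminus\{a\}$. A spanning tree is $T\subseteq E$ with $(V,T)$ connected and acyclic; bispanning means $E$ is the union of two disjoint spanning trees; atomic means the only bispanning subgraphs are the graph itself and single vertices. For a spanning tree $T$ of a graph $H$ and $e\notin T$, $C_H(T,e)$ is the edge set of the unique cycle in $T+e$; for $e\in T$, $D_H(T,e)$ is the set of edges of $H$ with one end in each component of $(V(H),T-e)$. For disjoint spanning trees $S,T$ covering all edges of $H$: $(e,f)$ with $e\in S,f\in T$ and $D_H(S,e)\cap C_H(T,e)=\{e,f\}$ is a unique $S$ edge exchange; $(e,f)$ with $e\in T,f\in S$ and $D_H(T,e)\cap C_H(S,e)=\{e,f\}$ is a unique $T$ edge exchange. $\vec\tau_3(H)$: vertex set $V_{\tau(H)}$ of ordered pairs $(S,T)$ of disjoint spanning trees covering all edges; an arc $(e,f,S,T)$ from $(S,T)$ to $(S-e+f,T+e-f)$ for each unique $S$ edge exchange and to $(S+e-f,T-e+f)$ for each unique $T$ edge exchange; $(e,f,P)$ with $P=(S,T)$ denotes $(e,f,S,T)$. The edge $e_w$ joins $v$ and $w$. The reduction graph $G_{a,b}$ has vertex set $V-v$ and edge set $E-e_x-e_y-e_z+e_{a,b}$ with $e_{a,b}$ a new edge with ends $a,b$. $\rho_{e_{a,b},c}(S,T)=(S-e_{a,b}+e_a+e_b,T+e_c)$ if $e_{a,b}\in S$ and $=(S+e_c,T-e_{a,b}+e_a+e_b)$ if $e_{a,b}\in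 T$. *)

(* Defs.v *)
(* Finite multigraphs (parallel edges allowed, no loops). *)
From mathcomp Require Export all_boot.
Set Implicit Arguments. Unset Strict Implicit. Unset Printing Implicit Defensive.

Record mgraph (V E : finType) := MGraph {
  gV : {set V};
  gE : {set E};
  gs : E -> V;
  gt : E -> V }.

Section Graphs.
Variables (V E : finType).
Implicit Types (H : mgraph V E) (F C S T : {set E}) (g e f : E) (u w : V).

Definition is_graph H :=
  [&& gV H != set0,
      [forall g in gE H, (gs H g \in gV H) && (gt H g \in gV H)] &
      [forall g in gE H, gs H g != gt H g]].

Definition incident H g u := (gs H g == u) || (gt H g == u).
Definition joins H g u w :=
  ((gs H g == u) && (gt H g == w)) || ((gs H g == w) && (gt H g == u)).

Definition adjF H F : rel V := fun u w => [exists g in F, joins H g u w].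
Definition conn H F u w := connect (adjF H F) u w.

Definition is_cycle H C :=
  [&& C != set0,
      [forall u, #|[set g in C | incident H g u]| \in [:: 0; 2]] &
      [forall g in C, forall h in C, conn H C (gs H g) (gs H h)]].

Definition acyclic H F := [forall C : {set E}, (C \subset F) ==> ~~ is_cycle H C].

Definition spanning_tree H F :=
  [&& F \subset gE H,
      [forall u in gV H, forall w in gV H, conn H F u w] & acyclic H F].

(* C_H(T,e): the edge set of the (unique) cycle of T+e, written as the union
   of all cycles contained in T+e *)
Definition Cyc H F e :=
  \bigcup_(C : {set E} | (C \subset F :|: [set e]) && is_cycle H C) C.

(* D_H(T,e): edges of H with one end in each component of (V(H), T-e);
   these components are those of the two ends of e. *)
Definition Dcut H F e :=
  [set g in gE H |
     (conn H (F :\ e) (gs H e) (gs H g) && conn H (F :\ e) (gt H e) (gt H g))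
  || (conn H (F :\ e) (gs H e) (gt H g) && conn H (F :\ e) (gt H e) (gs H g))].

Definition Vtau H S T :=
  [&& spanning_tree H S, spanning_tree H T, [disjoint S & T] & S :|: T == gE H].

Definition uniqS_exch H S T e f :=
  [&& e \in S, f \in T & Dcut H S e :&: Cyc H T e == [set e; f]].
Definition uniqT_exch H S T e f :=
  [&& e \in T, f \in S & Dcut H T e :&: Cyc H S e == [set e; f]].

Definition arc H e f S T :=
  Vtau H S T && (uniqS_exch H S T e f || uniqT_exch H S T e f).
Definition arcP H e f (P : {set E} * {set E}) := arc H e f P.1 P.2.

Definition bispanning H := [exists S, exists T, Vtau H S T].

Definition atomic H :=
  bispanning H /\
  forall (V' : {set V}) (E' : {set E}),
    V' \subset gV H -> E' \subset gE H ->
    is_graph (MGraph V' E' (gs H) (gt H)) ->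
    bispanning (MGraph V' E' (gs H) (gt H)) ->
    (V' = gV H /\ E' = gE H) \/ #|V'| = 1.

Definition reduction H v ex ey ez eab :=
  MGraph (gV H :\ v) ((gE H :\: [set ex; ey; ez]) :|: [set eab]) (gs H) (gt H).

Definition rho (eab ea eb ec : E) (S T : {set E}) : {set E} * {set E} :=
  if eab \in S then ((S :\ eab) :|: [set ea; eb], T :|: [set ec])
  else (S :|: [set ec], (T :\ eab) :|: [set ea; eb]).

End Graphs.

(* Main.v *)
Require Import Defs.
Set Implicit Arguments. Unset Strict Implicit. Unset Printing Implicit Defensive.


Section Gen.
Variables (V E : finType) (K : mgraph V E).
Implicit Types (F C P : {set E}) (g h : E) (u w x y : V).

Definition loopless g := gs K g != gt K g.
Definition deg C u := #|[set g in C | incident K g u]|.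

Lemma joinsP g u w :
  reflect ((gs K g = u /\ gt K g = w) \/ (gs K g = w /\ gt K g = u)) (joins K g u w).
Proof.
rewrite /joins; apply: (iffP orP).
  by case=> /andP[/eqP-> /eqP->]; [left|right].
by case=> -[-> ->]; rewrite !eqxx; [left|right].
Qed.

Lemma joins_sym g u w : joins K g u w = joins K g w u.
Proof. by rewrite /joins orbC. Qed.

Lemma joins_ends g : joins K g (gs K g) (gt K g).
Proof. by rewrite /joins !eqxx. Qed.

Lemma joins2 g u w u' w' : joins K g u w -> joins K g u' w' ->
  (u = u' /\ w = w') \/ (u = w' /\ w = u').
Proof.
case/joinsP=> -[<- <-] /joinsP [][-> ->]; by [left|right|right|left].
Qed.

Lemma incident_joins g u w z : joins K g u w -> incident K g z = (z == u) || (z == w).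
Proof. by rewrite /incident => /joinsP [][-> ->]; rewrite ![_ == z]eq_sym // orbC. Qed.

Lemma adj_sym F : symmetric (adjF K F).
Proof.
move=> u w; apply/existsP/existsP => -[g /andP[gF j]]; exists g;
  by rewrite gF joins_sym.
Qed.

Lemma conn_sym F u w : conn K F u w = conn K F w u.
Proof. exact: (sym_connect_sym (adj_sym F)). Qed.

Lemma conn_edge F g u w : g \in F -> joins K g u w -> conn K F u w.
Proof. by move=> gF j; apply/connect1/existsP; exists g; rewrite gF. Qed.

Lemma conn_hom F F' (f : V -> V) :
  (forall g u w, g \in F -> joins K g u w -> conn K F' (f u) (f w)) ->
  forall u w, conn K F u w -> conn K F' (f u) (f w).
Proof.
move=> Hf u w /connectP[p pth ->]; elim: p u pth => [|y p IH] u /=.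
  by move=> _; exact: connect0.
case/andP=> /existsP[g /andP[gF jg]] pth.
exact: connect_trans (Hf _ _ _ gF jg) (IH _ pth).
Qed.

Lemma conn_mono F F' u w : F \subset F' -> conn K F u w -> conn K F' u w.
Proof.
move=> sub; apply: (@conn_hom F F' id) => g u' w' gF j.
exact: conn_edge (subsetP sub _ gF) j.
Qed.


Lemma card_sum (T : finType) (A : {pred T}) (P : pred T) :
  #|[set x in A | P x]| = \sum_(x in A) P x.
Proof.
rewrite -sum1dep_card big_mkcond [RHS]big_mkcond /=; apply: eq_bigr => x _.
by case: (x \in A); case: (P x).
Qed.

Lemma parity C g : (forall u, deg C u \in [:: 0; 2]) -> g \in C ->
  (forall h, h \in C -> loopless h) -> conn K (C :\ g) (gs K g) (gt K g).
Proof.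
move=> Hdeg gC Hl; apply/negPn/negP => nc.
set A := [set u | conn K (C :\ g) (gs K g) u].
have e1 : \sum_(u in A) deg C u = \sum_(h in C) #|[set u in A | incident K h u]|.
  rewrite /deg; under eq_bigr do rewrite card_sum.
  rewrite exchange_big /=; apply: eq_bigr => h _; by rewrite card_sum.
have ev : 2 %| \sum_(u in A) deg C u.
  apply: dvdn_sum => u _; move: (Hdeg u); rewrite !inE => /orP[/eqP->|/eqP->] //.
have fg : #|[set u in A | incident K g u]| = 1.
  apply/eqP/cards1P; exists (gs K g); apply/setP => u; rewrite !inE /incident.
  case: (eqVneq u (gs K g)) => [->|ne]; first by rewrite /conn connect0.
  rewrite /=; case: (eqVneq (gt K g) u) => [<-|]; last by rewrite andbF.
  by rewrite andbT (negbTE nc).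
have fh : forall h, h \in C -> h != g -> 2 %| #|[set u in A | incident K h u]|.
  move=> h hC hg.
  have hCg : h \in C :\ g by rewrite !inE hg hC.
  have st : (gs K h \in A) = (gt K h \in A).
    rewrite !inE; apply/idP/idP => H1; apply: connect_trans H1 _.
      exact: conn_edge hCg (joins_ends h).
    by apply: (conn_edge hCg); rewrite joins_sym joins_ends.
  move: st; rewrite !inE => st.
  case sA: (conn K (C :\ g) (gs K g) (gs K h)).
    have ->: [set u in A | incident K h u] = [set gs K h; gt K h].
      apply/setP => u; rewrite !inE /incident.
      case: (eqVneq u (gs K h)) => [->|ne]; first by rewrite sA.
      rewrite /=.
      case: (eqVneq u (gt K h)) => [->|ne2]; first by rewrite -st sA ?eqxx.
      by rewrite /= ?andbF.
    by rewrite cards2 (negbTE (Hl _ hC)).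
  have ->: [set u in A | incident K h u] = set0.
    apply/setP => u; rewrite !inE /incident.
    case: (eqVneq u (gs K h)) => [->|ne]; first by rewrite sA.
    case: (eqVneq u (gt K h)) => [->|ne2]; first by rewrite -st sA.
    by rewrite /= ?andbF.
  by rewrite cards0.
move: ev; rewrite e1 (bigD1 g gC) /= fg.
have : 2 %| \sum_(i in C | i != g) #|[set u in A | incident K i u]|.
  by apply: dvdn_sum => h /andP[hC hg]; apply: fh.
by move=> H2; rewrite dvdn_addl.
Qed.


Lemma deg0 C u : (forall h, h \in C -> ~~ incident K h u) -> deg C u = 0.
Proof.
move=> Hn; apply/eqP; rewrite cards_eq0; apply/eqP/setP => h; rewrite !inE.
by apply/negbTE/andP => -[hC i]; move: (Hn _ hC); rewrite i.
Qed.

Lemma degU1 C h u : h \notin C -> deg (h |: C) u = incident K h u + deg C u.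
Proof.
move=> hC; rewrite /deg.
case i: (incident K h u).
  have ->: [set g in h |: C | incident K g u] = h |: [set g in C | incident K g u].
    apply/setP => g; rewrite !inE; case: (eqVneq g h) => [->|] /=; by rewrite ?i.
  by rewrite cardsU1 inE (negbTE hC).
have ->: [set g in h |: C | incident K g u] = [set g in C | incident K g u].
  apply/setP => g; rewrite !inE; case: (eqVneq g h) => [->|] /=; by rewrite ?i ?(negbTE hC).
by [].
Qed.

Definition pathset P u w :=
  [/\ u != w, deg P u = 1, deg P w = 1,
      forall x, x != u -> x != w -> deg P x \in [:: 0; 2] &
      forall h, h \in P -> conn K P u (gs K h) /\ conn K P u (gt K h)].

Lemma joins_conn F g u w : g \in F -> joins K g u w ->
  conn K F u (gs K g) /\ conn K F u (gt K g).
Proof.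
move=> gF j; have cuw := conn_edge gF j.
by case/joinsP: j => -[-> ->]; split => //; exact: connect0.
Qed.

Lemma pathset_conn P u w : pathset P u w -> conn K P u w.
Proof.
case=> _ _ dw _ Hc; move/eqP/cards1P: dw => [h eh].
have : h \in [set g in P | incident K g w] by rewrite eh set11.
rewrite inE => /andP[hP]; case: (Hc _ hP) => c1 c2.
by rewrite /incident => /orP[/eqP<-|/eqP<-].
Qed.

Lemma path_pathset F : forall p x, uniq (x :: p) -> path (adjF K F) x p -> p != [::] ->
  exists2 P : {set E}, P \subset F & pathset P x (last x p) /\
    (forall h z, h \in P -> incident K h z -> z \in x :: p).
Proof.
elim=> [|y p IH] x //= uq /andP[/existsP[h /andP[hF jh]] pth] _.
have xy : x != y by move: uq; rewrite !inE negb_or => /andP[/andP[]].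
case: p IH uq pth => [|y' p'] IH uq pth.
  exists [set h]; first by rewrite sub1set.
  have d1 : forall z, deg [set h] z = incident K h z.
    by move=> z; rewrite -[[set h]]setU0 degU1 ?inE // deg0 ?addn0 // => g; rewrite inE.
  split; last by move=> g z; rewrite inE => /eqP-> ; rewrite (incident_joins _ jh) !inE.
  split => //=; rewrite ?d1 ?(incident_joins _ jh) ?eqxx ?orbT //.
    by move=> z zx zy; rewrite d1 (incident_joins _ jh) (negbTE zx) (negbTE zy).
  move=> g; rewrite inE => /eqP->; exact: joins_conn (set11 h) jh.
move: uq => /= /andP[xn uq]; move: (uq) => /andP[yn uq'].
have [P' sub [[ny d1 d2 d3 c4] inc]] := IH y uq pth isT.
set w := last y' p' in ny d2 d3 c4 inc *.
have xP : forall g z, g \in P' -> incident K g z -> z != x.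
  by move=> g z gP i; apply/eqP => zx; move: xn; rewrite -zx (inc _ _ gP i).
have hP : h \notin P'.
  apply/negP => hP; have := xP _ x hP; rewrite (incident_joins _ jh) eqxx /= => /(_ isT).
  by rewrite ?eqxx.
have wx : w != x.
  apply/eqP => wx; move: xn; rewrite -wx /w.
  have: last y' p' \in y :: y' :: p' by rewrite inE mem_last orbT.
  by move=> ->.
have wy : w != y by rewrite eq_sym.
exists (h |: P').
  by rewrite subUset sub1set hF (subset_trans sub) // subsetIl.
have dx : deg P' x = 0.
  by apply: deg0 => g gP; apply/negP => i; move: (xP _ _ gP i); rewrite eqxx.
split.
  split.
  - by rewrite eq_sym.
  - by rewrite degU1 // (incident_joins _ jh) eqxx dx.
  - by rewrite degU1 // (incident_joins _ jh) (negbTE wx) (negbTE wy) d2.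
  - move=> z zx zw; rewrite degU1 // (incident_joins _ jh) (negbTE zx) /=.
    case: (eqVneq z y) => [->|zy]; first by rewrite d1.
    by rewrite add0n d3.
  - move=> g; rewrite !inE => /orP[/eqP->|gP].
      by case: (joins_conn (setU11 h P') jh).
    have cxy : conn K (h |: P') x y by apply: conn_edge (setU11 h P') jh.
    case: (c4 _ gP) => c1 c2; split; apply: connect_trans cxy _;
      apply: conn_mono _ (subsetUr _ _) _ => //.
move=> g z; rewrite !inE => /orP[/eqP->|gP].
  by rewrite (incident_joins _ jh) => /orP[/eqP->|/eqP->]; rewrite ?eqxx ?orbT.
by move=> i; move: (inc _ _ gP i); rewrite !inE => /orP[->|->]; rewrite ?orbT.
Qed.

Lemma conn_pathset F u w : conn K F u w -> u != w ->
  exists2 P : {set E}, P \subset F & pathset P u w.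
Proof.
move/connectP=> [p pth ->]; case: (shortenP pth) => p' pth' uq _ ne.
have p'n : p' != [::] by case: p' pth' uq ne => //= _ _; rewrite eqxx.
by have [P s [ps _]] := path_pathset uq pth' p'n; exists P.
Qed.

Lemma pathset_cycle P u w g : pathset P u w -> g \notin P -> joins K g u w ->
  is_cycle K (g |: P).
Proof.
move=> ps gP j; have cuw := pathset_conn ps; case: ps => uw du dw dx cc.
apply/and3P; split.
- by apply/set0Pn; exists g; rewrite setU11.
- apply/forallP => z; change (deg (g |: P) z \in [:: 0; 2]); rewrite degU1 //.
  rewrite (incident_joins _ j); case: (eqVneq z u) => [->|zu]; first by rewrite du.
  case: (eqVneq z w) => [->|zw]; first by rewrite dw.
  by rewrite add0n dx.
have cu : forall h, h \in g |: P -> conn K (g |: P) u (gs K h).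
  move=> h; rewrite !inE => /orP[/eqP->|hP].
    case: (joins_conn (setU11 g P) j) => //.
  by case: (cc _ hP) => c1 _; apply: conn_mono c1; apply: subsetUr.
apply/forallP => h1; apply/implyP => h1C; apply/forallP => h2; apply/implyP => h2C.
have c1 := cu _ h1C; rewrite conn_sym in c1; exact: connect_trans c1 (cu _ h2C).
Qed.

Lemma acyc_bridge F g : acyclic K F -> g \in F -> loopless g ->
  ~~ conn K (F :\ g) (gs K g) (gt K g).
Proof.
move=> ac gF lg; apply/negP => cn.
have [P sub ps] := conn_pathset cn lg.
have gP : g \notin P by apply/negP => /(subsetP sub); rewrite !inE eqxx.
have cy := pathset_cycle ps gP (joins_ends g).
move/forallP: ac => /(_ (g |: P)); rewrite cy implybF subUset sub1set gF.
by rewrite (subset_trans sub) // subsetDl.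
Qed.

Lemma acyc_of_bridges F : (forall h, h \in F -> loopless h) ->
  (forall h, h \in F -> ~~ conn K (F :\ h) (gs K h) (gt K h)) -> acyclic K F.
Proof.
move=> Hl Hb; apply/forallP => C; apply/implyP => CF; apply/negP.
case/and3P => /set0Pn[g gC] /forallP dg _.
have gF := subsetP CF _ gC.
have := parity (fun u => dg u) gC (fun h hC => Hl _ (subsetP CF _ hC)).
move/(conn_mono (setSD _ CF)); apply/negP; exact: Hb.
Qed.

Lemma cyc_sub F q g : g \in Cyc K F q -> g \in F :|: [set q].
Proof. by case/bigcupP => C /andP[CF _] /(subsetP CF). Qed.

Lemma cyc_char F q g : acyclic K F -> q \notin F -> loopless q ->
  (forall h, h \in F -> loopless h) ->
  g \in Cyc K F q = [&& g \in F :|: [set q], conn K F (gs K q) (gt K q) &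
                       (g != q) ==> ~~ conn K (F :\ g) (gs K q) (gt K q)].
Proof.
move=> ac qF lq Hl.
have HlC : forall C, C \subset F :|: [set q] -> forall h, h \in C -> loopless h.
  move=> C CF h /(subsetP CF); rewrite !inE => /orP[/Hl //|/eqP->//].
apply/bigcupP/and3P.
  case=> C /andP[CF cy] gC.
  have qC : q \in C.
    apply/negPn/negP => qC; move/forallP: ac => /(_ C); rewrite cy implybF.
    move/negP; apply; apply/subsetP => h hC; move: (subsetP CF _ hC); rewrite !inE.
    by case/orP => // /eqP hq; move: qC; rewrite -hq hC.
  have dg : forall u, deg C u \in [:: 0; 2] by move=> u; case/and3P: cy => _ /forallP H0 _; exact: H0.
  split; first exact: (subsetP CF).
    have := parity dg qC (HlC _ CF); apply: conn_mono.
    apply/subsetP => h; rewrite !inE => /andP[hq /(subsetP CF)]; rewrite !inE (negbTE hq).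
    by rewrite orbF.
  apply/implyP => gq; apply/negP => cn.
  have gF : g \in F by move: (subsetP CF _ gC); rewrite !inE (negbTE gq) orbF.
  have := parity dg gC (HlC _ CF).
  move/(@conn_hom _ (F :\ g) id) => /= H1; apply: (negP (acyc_bridge ac gF (Hl _ gF))).
  apply: H1 => h u w; rewrite !inE => /andP[hg hC] j.
  case: (eqVneq h q) => [eq|hq].
    rewrite eq in j; case: (joins2 j (joins_ends q)) => -[-> ->] //; by rewrite conn_sym.
  apply: (conn_edge _ j); rewrite !inE hg.
  by move: (subsetP CF _ hC); rewrite !inE (negbTE hq) orbF.
case=> gFq cn imp.
have [P sub ps] := conn_pathset cn lq.
have qP : q \notin P by apply/negP => /(subsetP sub); rewrite (negbTE qF).
exists (q |: P).
  rewrite (pathset_cycle ps qP (joins_ends q)) andbT subUset sub1set !inE eqxx orbT /=.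
  by apply: (subset_trans sub); apply: subsetUl.
case: (eqVneq g q) => [->|gq]; first by rewrite setU11.
rewrite !inE /=; apply/negPn/negP => gP.
move: imp; rewrite gq /= => /negP; apply.
apply: conn_mono (pathset_conn ps).
apply/subsetP => h hP; rewrite !inE (subsetP sub _ hP) andbT. by apply: contraNneq gP => <-; rewrite hP orbT.
Qed.

Lemma side_cover F p x : p \in F -> conn K F (gs K p) x ->
  conn K (F :\ p) (gs K p) x || conn K (F :\ p) (gt K p) x.
Proof.
move=> pF /connectP[s pth ->].
pose R := fun y => conn K (F :\ p) (gs K p) y || conn K (F :\ p) (gt K p) y.
have R0 : R (gs K p) by rewrite /R /conn connect0.
suff aux : forall s y, R y -> path (adjF K F) y s -> R (last y s) by exact: aux.
elim=> [|z s' IH] y Ry //= /andP[/existsP[h /andP[hF jh]] pth'].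
apply: IH pth'.
case: (eqVneq h p) => [e|hp].
  rewrite e in jh; case: (joins2 jh (joins_ends p)) => -[_ ->]; by rewrite /R /conn connect0 ?orbT.
have cyz : conn K (F :\ p) y z by apply: conn_edge jh; rewrite !inE hp.
by move: Ry; rewrite /R /conn; case/orP => H1; rewrite (connect_trans H1 cyz) ?orbT.
Qed.

Lemma side_excl F p x : acyclic K F -> p \in F -> loopless p ->
  ~~ (conn K (F :\ p) (gs K p) x && conn K (F :\ p) (gt K p) x).
Proof.
move=> ac pF lp; apply/negP => /andP[c1 c2].
apply: (negP (acyc_bridge ac pF lp)); rewrite conn_sym in c2; exact: connect_trans c1 c2.
Qed.

Lemma side_D F p x y : acyclic K F -> p \in F -> loopless p ->
  conn K F (gs K p) x -> conn K F (gs K p) y ->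
  ((conn K (F :\ p) (gs K p) x && conn K (F :\ p) (gt K p) y) ||
   (conn K (F :\ p) (gs K p) y && conn K (F :\ p) (gt K p) x)) =
  (conn K (F :\ p) (gs K p) x != conn K (F :\ p) (gs K p) y).
Proof.
move=> ac pF lp cx cy.
move: (side_cover pF cx) (side_cover pF cy) (side_excl x ac pF lp) (side_excl y ac pF lp).
case: (conn K (F :\ p) (gs K p) x); case: (conn K (F :\ p) (gt K p) x);
case: (conn K (F :\ p) (gs K p) y); case: (conn K (F :\ p) (gt K p) y); by [].
Qed.

Lemma side_N F p x y : acyclic K F -> p \in F -> loopless p ->
  conn K F (gs K p) x -> conn K F (gs K p) y ->
  conn K (F :\ p) x y = (conn K (F :\ p) (gs K p) x == conn K (F :\ p) (gs K p) y).
Proof.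
move=> ac pF lp cx cy; apply/idP/eqP => [cxy|eqs].
  have cyx := cxy; rewrite conn_sym in cyx.
  apply/idP/idP => H1; [exact: connect_trans H1 cxy | exact: connect_trans H1 cyx].
move: (side_cover pF cx) (side_cover pF cy) eqs.
case sx: (conn K (F :\ p) (gs K p) x); case sy: (conn K (F :\ p) (gs K p) y) => //= tx ty _.
  by rewrite conn_sym in sx; exact: connect_trans sx sy.
by rewrite conn_sym in tx; exact: connect_trans tx ty.
Qed.

Lemma inDcut F p g : (g \in Dcut K F p) = (g \in gE K) &&
  ((conn K (F :\ p) (gs K p) (gs K g) && conn K (F :\ p) (gt K p) (gt K g))
|| (conn K (F :\ p) (gs K p) (gt K g) && conn K (F :\ p) (gt K p) (gs K g))).
Proof. by rewrite /Dcut inE. Qed.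

Lemma Vtau_sym S T : Vtau K S T = Vtau K T S.
Proof.
rewrite /Vtau disjoint_sym setUC.
by case: (spanning_tree K S); case: (spanning_tree K T).
Qed.

Lemma arc_sym e f S T : arc K e f S T = arc K e f T S.
Proof. by rewrite /arc Vtau_sym orbC. Qed.

End Gen.


Section Core.
Variables (V E : finType) (G : mgraph V E) (v a b c : V) (ea eb ec eab : E).
Hypotheses (HG : is_graph G) (Hv : v \in gV G)
  (Hea : ea \in gE G) (Heb : eb \in gE G) (Hec : ec \in gE G)
  (Ja : joins G ea v a) (Jb : joins G eb v b) (Jc : joins G ec v c)
  (Hinc : [set g in gE G | incident G g v] = [set ea; eb; ec])
  (Nab : ea != eb) (Nac : ea != ec) (Nbc : eb != ec)
  (Hab : a != b) (Heab : eab \notin gE G) (Hs : gs G eab = a) (Ht : gt G eab = b).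

Local Notation H := (MGraph (gV G :\ v) ((gE G :\: [set ea; eb; ec]) :|: [set eab]) (gs G) (gt G)).

Lemma loopG g : g \in gE G -> loopless G g.
Proof. by case/and3P: HG => _ _ /forallP L gG; move: (L g); rewrite gG. Qed.

Lemma endsG g : g \in gE G -> gs G g \in gV G /\ gt G g \in gV G.
Proof. by case/and3P: HG => _ /forallP L _ gG; move: (L g); rewrite gG => /andP. Qed.

Lemma jab : joins G eab a b.
Proof. by rewrite /joins Hs Ht !eqxx. Qed.

Lemma nv_of g : ~~ incident G g v -> gs G g != v /\ gt G g != v.
Proof. by rewrite /incident negb_or => /andP. Qed.

Lemma jne g w : g \in gE G -> joins G g v w -> w != v /\ w \in gV G.
Proof.
move=> gG j; have L := loopG gG; have [E1 E2] := endsG gG; rewrite /loopless in L.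
by case/joinsP: j => -[e1 e2]; rewrite e1 e2 in L E1 E2; split => //; rewrite eq_sym.
Qed.

Lemma va : a != v. Proof. by case: (jne Hea Ja). Qed.
Lemma vb : b != v. Proof. by case: (jne Heb Jb). Qed.
Lemma vc : c != v. Proof. by case: (jne Hec Jc). Qed.
Lemma aV : a \in gV G. Proof. by case: (jne Hea Ja). Qed.
Lemma bV : b \in gV G. Proof. by case: (jne Heb Jb). Qed.
Lemma cV : c \in gV G. Proof. by case: (jne Hec Jc). Qed.

Lemma nvH g : g \in gE H -> ~~ incident G g v.
Proof.
rewrite in_setU in_setD in_set1 => /orP[/andP[n3 gG]|/eqP->].
  by apply/negP => i; move: n3; rewrite -Hinc inE gG i.
by rewrite /incident Hs Ht negb_or va vb.
Qed.

Lemma loopH g : g \in gE H -> loopless G g.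
Proof.
rewrite in_setU in_setD in_set1 => /orP[/andP[_ gG]|/eqP->]; first exact: loopG.
by rewrite /loopless Hs Ht.
Qed.

Lemma HG_of g : g \in gE H -> g != eab -> g \in gE G.
Proof. by rewrite in_setU in_setD in_set1 => /orP[/andP[_ ->]|/eqP->] //; rewrite eqxx. Qed.

Lemma endsH g : g \in gE H -> gs G g \in gV H /\ gt G g \in gV H.
Proof.
move=> gH; have [n1 n2] := nv_of (nvH gH).
have [e1 e2] : gs G g \in gV G /\ gt G g \in gV G.
  case: (eqVneq g eab) => [->|ne]; first by rewrite Hs Ht aV bV.
  exact: endsG (HG_of gH ne).
by rewrite /= !inE n1 n2 e1 e2.
Qed.

Lemma eaH : ea \notin gE H. Proof. by rewrite !inE eqxx /=; apply/eqP => e; move: Heab; rewrite -e Hea. Qed.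
Lemma ebH : eb \notin gE H. Proof. by rewrite !inE eqxx /= orbT /=; apply/eqP => e; move: Heab; rewrite -e Heb. Qed.
Lemma ecH : ec \notin gE H. Proof. by rewrite !inE eqxx /= !orbT /=; apply/eqP => e; move: Heab; rewrite -e Hec. Qed.

Definition fv (w0 u : V) := if u == v then w0 else u.

Lemma fv_id w0 u : u != v -> fv w0 u = u.
Proof. by rewrite /fv => /negbTE->. Qed.

Lemma transA (F : {set E}) pe w0 : (forall h, h \in F -> ~~ incident G h v) -> joins G pe v w0 -> w0 != v ->
  forall x y, conn G (F :|: [set pe]) x y = conn G F (fv w0 x) (fv w0 y).
Proof.
move=> nv jp wv x y; apply/idP/idP.
  apply: conn_hom => h u w; rewrite !inE => /orP[hF|/eqP->] j.
    have := nv _ hF; rewrite (incident_joins _ j) negb_or => /andP[vu vw].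
    rewrite /fv eq_sym (negbTE vu) eq_sym (negbTE vw); exact: conn_edge hF j.
  by case: (joins2 j jp) => -[-> ->]; rewrite /fv eqxx (negbTE wv); exact: connect0.
move=> cn.
have cx : forall z, conn G (F :|: [set pe]) z (fv w0 z).
  move=> z; rewrite /fv; case: (eqVneq z v) => [->|_]; last exact: connect0.
  by apply: conn_edge jp; rewrite !inE eqxx orbT.
apply: connect_trans (cx x) _; apply: connect_trans (conn_mono (subsetUl _ _) cn) _.
by have := cx y; rewrite conn_sym.
Qed.

Lemma transB (F : {set E}) : (forall h, h \in F -> ~~ incident G h v) -> eab \in F ->
  forall x y, conn G ((F :\ eab) :|: [set ea; eb]) x y = conn G F (fv a x) (fv a y).
Proof.
move=> nv eF x y; apply/idP/idP.
  apply: conn_hom => h u w; rewrite !inE => /orP[/andP[he hF]|/orP[/eqP->|/eqP->]] j.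
  - have := nv _ hF; rewrite (incident_joins _ j) negb_or => /andP[vu vw].
    rewrite /fv eq_sym (negbTE vu) eq_sym (negbTE vw); exact: conn_edge hF j.
  - by case: (joins2 j Ja) => -[-> ->]; rewrite /fv eqxx (negbTE va); exact: connect0.
  - case: (joins2 j Jb) => -[-> ->]; rewrite /fv eqxx (negbTE vb); last rewrite conn_sym;
    exact: conn_edge eF jab.
set F' := (F :\ eab) :|: [set ea; eb].
have cav : conn G F' a v.
  by apply: (@conn_edge _ _ _ _ ea); [rewrite !inE eqxx orbT | rewrite joins_sym].
have cvb : conn G F' v b by apply: (@conn_edge _ _ _ _ eb) Jb; rewrite !inE eqxx !orbT.
move=> cn.
have Hf : forall h u w, h \in F -> joins G h u w -> conn G F' (id u) (id w).
  move=> h u w hF j.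
  case: (eqVneq h eab) => [e|he].
    rewrite e in j; case: (joins2 j jab) => -[-> ->] /=; first exact: connect_trans cav cvb.
    by rewrite conn_sym; exact: connect_trans cav cvb.
  by apply: conn_edge j; rewrite !inE he hF.
have c2 := @conn_hom _ _ G F F' id Hf _ _ cn.
have cx : forall z, conn G F' z (fv a z).
  move=> z; rewrite /fv; case: (eqVneq z v) => [->|_]; last exact: connect0.
  by rewrite conn_sym.
apply: connect_trans (cx x) _; apply: connect_trans c2 _.
by have := cx y; rewrite conn_sym.
Qed.

Lemma nv_conn (F : {set E}) w : (forall h, h \in F -> ~~ incident G h v) -> conn G F v w -> w = v.
Proof.
move=> nv /connectP[[|y p] /= pth ->] //.
move: pth => /andP[/existsP[h /andP[hF j]] _].
by have := nv _ hF; rewrite (incident_joins _ j) eqxx.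
Qed.


Lemma VtauP S T : Vtau H S T ->
  [/\ S \subset gE H, T \subset gE H,
      (forall u w, u \in gV H -> w \in gV H -> conn G S u w /\ conn G T u w),
      acyclic G S /\ acyclic G T &
      (forall g, g \in S -> g \notin T) /\ (forall g, (g \in gE H) = (g \in S) || (g \in T))].
Proof.
case/and4P => /and3P[sS /forallP cS aS] /and3P[sT /forallP cT aT] dj /eqP U.
split => //.
  move=> u w uV wV; move: (cS u) (cT u); rewrite uV /= => /forallP/(_ w) + /forallP/(_ w).
  by rewrite wV /= => c1 c2; split; [exact: c1 | exact: c2].
by split; [move=> g gS; rewrite (disjointFr dj gS) | move=> g; rewrite -U inE].
Qed.

Lemma setSD (S : {set E}) h : h != ea -> h != eb ->
  ((S :\ eab) :|: [set ea; eb]) :\ h = ((S :\ h) :\ eab) :|: [set ea; eb].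
Proof.
move=> ha hb; apply/setP => g; rewrite !inE.
case: (eqVneq g h) => [->|gh]; first by rewrite (negbTE ha) (negbTE hb) /= andbF.
by rewrite /= andbC.
Qed.

Lemma setSDa (S : {set E}) : ea \notin S ->
  ((S :\ eab) :|: [set ea; eb]) :\ ea = (S :\ eab) :|: [set eb].
Proof.
move=> aS; apply/setP => g; rewrite !inE.
case: (eqVneq g ea) => [->|ga]; first by rewrite /= (negbTE aS) andbF (negbTE Nab).
by [].
Qed.

Lemma setSDb (S : {set E}) : eb \notin S ->
  ((S :\ eab) :|: [set ea; eb]) :\ eb = (S :\ eab) :|: [set ea].
Proof.
move=> bS; apply/setP => g; rewrite !inE.
case: (eqVneq g eb) => [->|gb]; first by rewrite /= (negbTE bS) andbF eq_sym (negbTE Nab).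
by rewrite /= orbF.
Qed.

Lemma setTD (T : {set E}) h : h != ec -> (T :|: [set ec]) :\ h = (T :\ h) :|: [set ec].
Proof.
move=> hc; apply/setP => g; rewrite !inE.
case: (eqVneq g h) => [->|gh]; first by rewrite (negbTE hc).
by [].
Qed.

Lemma setTDc (T : {set E}) : ec \notin T -> (T :|: [set ec]) :\ ec = T.
Proof.
move=> cT; apply/setP => g; rewrite !inE.
case: (eqVneq g ec) => [->|gc]; first by rewrite (negbTE cT).
by rewrite orbF.
Qed.


Lemma fvV w0 u : w0 \in gV H -> u \in gV G -> fv w0 u \in gV H.
Proof.
rewrite /fv; case: (eqVneq u v) => [_ //|uv] _ uV.
by rewrite /= !inE uv uV.
Qed.

Lemma aH : a \in gV H. Proof. by rewrite /= !inE va aV. Qed.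
Lemma bH : b \in gV H. Proof. by rewrite /= !inE vb bV. Qed.
Lemma cH : c \in gV H. Proof. by rewrite /= !inE vc cV. Qed.

Lemma VtauS S T : Vtau H S T -> eab \in S ->
  Vtau G ((S :\ eab) :|: [set ea; eb]) (T :|: [set ec]).
Proof.
case/VtauP => sS sT cST [aS aT] [dj U] eS.
have nS : forall h, h \in S -> ~~ incident G h v := fun h hS => nvH (subsetP sS _ hS).
have nT : forall h, h \in T -> ~~ incident G h v := fun h hT => nvH (subsetP sT _ hT).
have lS : forall h, h \in S -> loopless G h := fun h hS => loopH (subsetP sS _ hS).
have lT : forall h, h \in T -> loopless G h := fun h hT => loopH (subsetP sT _ hT).
have nH : forall g, g \notin gE H -> g \notin S /\ g \notin T.
  by move=> g gH; split; apply/negP => /(subsetP (_ : _ \subset gE H)) => /(_ _) G1; 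
    [move: gH; rewrite (G1 sS) | move: gH; rewrite (G1 sT)].
have [aS' aT'] := nH _ eaH; have [bS' bT'] := nH _ ebH; have [cS' cT'] := nH _ ecH.
have eT := dj _ eS.
have nSD : forall h, forall g, g \in S :\ h -> ~~ incident G g v.
  by move=> h g; rewrite inE => /andP[_ /nS].
have nTD : forall h, forall g, g \in T :\ h -> ~~ incident G g v.
  by move=> h g; rewrite inE => /andP[_ /nT].
have ends_nv : forall g, ~~ incident G g v -> forall w0, fv w0 (gs G g) = gs G g /\ fv w0 (gt G g) = gt G g.
  by move=> g ng w0; have [n1 n2] := nv_of ng; rewrite !fv_id.
apply/and4P; split.
- apply/and3P; split.
  + apply/subsetP => g; rewrite !inE => /orP[/andP[ge gS]|/orP[/eqP->|/eqP->]] //.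
    exact: HG_of (subsetP sS _ gS) ge.
  + apply/forallP => u; apply/implyP => uV; apply/forallP => w; apply/implyP => wV.
    rewrite /= transB //. exact: (cST _ _ (fvV aH uV) (fvV aH wV)).1.
  + apply: acyc_of_bridges.
      move=> h; rewrite !inE => /orP[/andP[_ /lS //]|/orP[/eqP->|/eqP->]]; exact: loopG.
    move=> h; rewrite !inE => /orP[/andP[he hS]|/orP[/eqP->|/eqP->]].
    * have ha : h != ea by apply: contraNneq aS' => <-.
      have hb : h != eb by apply: contraNneq bS' => <-.
      have ehS : eab \in S :\ h by rewrite !inE eS andbT eq_sym.
      rewrite setSD // (transB (nSD h) ehS).
      have [-> ->] := ends_nv _ (nS _ hS) a.
      exact: acyc_bridge aS hS (lS _ hS).
    * rewrite setSDa // (transA (nSD eab) Jb vb).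
      have := acyc_bridge aS eS (lS _ eS); rewrite Hs Ht => nab.
      case/joinsP: Ja => -[-> ->]; rewrite /fv eqxx (negbTE va) //.
      by rewrite conn_sym.
    * rewrite setSDb // (transA (nSD eab) Ja va).
      have := acyc_bridge aS eS (lS _ eS); rewrite Hs Ht => nab.
      case/joinsP: Jb => -[-> ->]; rewrite /fv eqxx (negbTE vb) //.
      by rewrite conn_sym.
- apply/and3P; split.
  + apply/subsetP => g; rewrite !inE => /orP[gT|/eqP-> //].
    by apply: HG_of (subsetP sT _ gT) _; apply: contraNneq eT => <-.
  + apply/forallP => u; apply/implyP => uV; apply/forallP => w; apply/implyP => wV.
    rewrite /= (transA nT Jc vc). exact: (cST _ _ (fvV cH uV) (fvV cH wV)).2.
  + apply: acyc_of_bridges.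
      move=> h; rewrite !inE => /orP[/lT //|/eqP->]; exact: loopG.
    move=> h; rewrite !inE => /orP[hT|/eqP->].
    * have hc : h != ec by apply: contraNneq cT' => <-.
      rewrite setTD // (transA (nTD h) Jc vc).
      have [-> ->] := ends_nv _ (nT _ hT) c.
      exact: acyc_bridge aT hT (lT _ hT).
    * rewrite setTDc //; apply/negP => cn.
      case/joinsP: Jc => -[e1 e2]; rewrite e1 e2 in cn.
        by move: vc; rewrite (nv_conn nT cn) eqxx.
      by rewrite conn_sym in cn; move: vc; rewrite (nv_conn nT cn) eqxx.
- rewrite -setI_eq0; apply/eqP/setP => g; rewrite !inE.
  apply/negbTE/negP => /andP[g1 g2].
  case/orP: g1 => [/andP[_ gS]|/orP[/eqP e|/eqP e]]; case/orP: g2 => [gT|/eqP e'].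
  + by move: (dj _ gS); rewrite gT.
  + by move: cS'; rewrite -e' gS.
  + by move: aT'; rewrite -e gT.
  + by move: Nac; rewrite -e e' eqxx.
  + by move: bT'; rewrite -e gT.
  + by move: Nbc; rewrite -e e' eqxx.
- apply/eqP/setP => g; rewrite !inE; apply/idP/idP.
    case/orP => [/orP[/andP[ge gS]|/orP[/eqP->|/eqP->]]|/orP[gT|/eqP->]] //.
      exact: HG_of (subsetP sS _ gS) ge.
    by apply: HG_of (subsetP sT _ gT) _; apply: contraNneq eT => <-.
  move=> gG; case: (eqVneq g ea) => [->|ga]; first by rewrite ?eqxx /= ?orbT.
  case: (eqVneq g eb) => [->|gb]; first by rewrite ?eqxx /= ?orbT.
  case: (eqVneq g ec) => [->|gc]; first by rewrite ?eqxx /= ?orbT.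
  have gH : g \in gE H by rewrite !inE /= gG (negbTE ga) (negbTE gb) (negbTE gc).
  have ge : g != eab by apply: contraNneq Heab => <-.
  by move: gH; rewrite U ge => /orP[->|->]; rewrite ?orbT.
Qed.


Lemma nvsub (X : {set E}) : X \subset gE H -> forall h, h \in X -> ~~ incident G h v.
Proof. by move=> sX h hX; apply: nvH (subsetP sX _ hX). Qed.
Lemma lsub (X : {set E}) : X \subset gE H -> forall h, h \in X -> loopless G h.
Proof. by move=> sX h hX; apply: loopH (subsetP sX _ hX). Qed.
Lemma nvD (X : {set E}) h : (forall g, g \in X -> ~~ incident G g v) ->
  forall g, g \in X :\ h -> ~~ incident G g v.
Proof. by move=> nX g; rewrite inE => /andP[_ /nX]. Qed.

Lemma transA' (F : {set E}) pe w0 x y : (forall h, h \in F -> ~~ incident G h v) ->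
  joins G pe v w0 -> w0 != v -> x != v -> y != v ->
  conn G (F :|: [set pe]) x y = conn G F x y.
Proof. by move=> nF jp wv xv yv; rewrite (transA nF jp wv) !fv_id. Qed.

Lemma transB' (F : {set E}) x y : (forall h, h \in F -> ~~ incident G h v) -> eab \in F ->
  x != v -> y != v -> conn G ((F :\ eab) :|: [set ea; eb]) x y = conn G F x y.
Proof. by move=> nF eF xv yv; rewrite (transB nF eF) !fv_id. Qed.

Lemma set_eq_split (X E2 : {set E}) (p q r : E) : p \notin E2 -> q \notin E2 -> r \notin E2 ->
  (X == E2) = [&& p \notin X, q \notin X, r \notin X &
     [forall g, ((g != p) && (g != q) && (g != r)) ==> ((g \in X) == (g \in E2))]].
Proof.
move=> pE qE rE; apply/eqP/and4P => [->|[pX qX rX /forallP Hf]].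
  by split => //; apply/forallP => g; rewrite eqxx implybT.
apply/setP => g; case: (eqVneq g p) => [->|gp]; first by rewrite (negbTE pX) (negbTE pE).
case: (eqVneq g q) => [->|gq]; first by rewrite (negbTE qX) (negbTE qE).
case: (eqVneq g r) => [->|gr]; first by rewrite (negbTE rX) (negbTE rE).
by move: (Hf g); rewrite gp gq gr /= => /eqP.
Qed.

Lemma VtauG_acyc (X Y : {set E}) : Vtau G X Y -> acyclic G X /\ acyclic G Y.
Proof. by case/and4P => /and3P[_ _ ?] /and3P[_ _ ?] _ _. Qed.

Section Core2.
Variables (S T : {set E}).
Hypotheses (VST : Vtau H S T) (eS : eab \in S).

Local Notation Sp := ((S :\ eab) :|: [set ea; eb]).
Local Notation Tp := (T :|: [set ec]).

Lemma eT : eab \notin T.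
Proof. by have [_ _ _ _ [dj _]] := VtauP VST; apply: dj. Qed.

Lemma notST g : g \notin gE H -> g \notin S /\ g \notin T.
Proof.
have [sS sT _ _ _] := VtauP VST.
by move=> gH; split; apply/negP => gX; move: gH; rewrite ?(subsetP sS _ gX) ?(subsetP sT _ gX).
Qed.

Lemma cycT e g : e \in gE H -> e \notin T -> e != eab ->
  (g \in Cyc G Tp e) = (g \in Cyc G T e).
Proof.
move=> eH eT' ee.
have [sS sT cST [aS aT] [dj U]] := VtauP VST.
have [_ aTp] := VtauG_acyc (VtauS VST eS).
have [_ cT'] := notST ecH.
have nT := nvsub sT; have lT := lsub sT.
have [n1 n2] := nv_of (nvH eH).
have ec_e : e != ec by apply: contraNneq ecH => E1; move: eH; rewrite E1.
have eTp : e \notin Tp by rewrite !inE negb_or eT' ec_e.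
have lTp : forall h, h \in Tp -> loopless G h.
  by move=> h; rewrite !inE => /orP[/lT //|/eqP->]; exact: loopG.
rewrite (cyc_char _ aTp eTp (loopH eH) lTp) (cyc_char _ aT eT' (loopH eH) lT).
rewrite (transA' nT Jc vc n1 n2).
case: (eqVneq g ec) => [->|gc].
  rewrite setTDc // !inE eqxx /=.
  by rewrite orbT /= (negbTE cT') eq_sym (negbTE ec_e) /= andbN.
rewrite setTD // (transA' (nvD (h:=g) nT) Jc vc n1 n2).
by rewrite !inE (negbTE gc) orbF.
Qed.


Lemma gHG g : g \in gE H -> g != eab -> g \in gE G.
Proof. exact: HG_of. Qed.

Lemma US_eq e : e \in S -> e != eab ->
  Dcut G Sp e :&: Cyc G Tp e = Dcut H S e :&: Cyc G T e.
Proof.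
move=> eS' ee.
have [sS sT cST [aS aT] [dj U]] := VtauP VST.
have eH := subsetP sS _ eS'.
have eT' := dj _ eS'.
have [aS' _] := notST eaH; have [bS' _] := notST ebH.
have ea_e : e != ea by apply: contraNneq aS' => <-.
have eb_e : e != eb by apply: contraNneq bS' => <-.
apply/setP => g; rewrite !in_setI (cycT g eH eT' ee).
case gC: (g \in Cyc G T e); rewrite ?andbF ?andbT //.
have gTe := cyc_sub gC.
have gne : g != eab by apply: contraTneq gTe => ->; rewrite !inE (negbTE eT) /= eq_sym.
have gH : g \in gE H by move: gTe; rewrite in_setU in_set1 => /orP[/(subsetP sT) //|/eqP->].
have [n1 n2] := nv_of (nvH eH); have [m1 m2] := nv_of (nvH gH).
have ehS : eab \in S :\ e by rewrite !inE eS andbT eq_sym.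
have nSe := nvD (h:=e) (nvsub sS).
rewrite !inDcut (gHG gH gne) gH setSD //.
by rewrite !(transB' nSe ehS).
Qed.


Lemma lSp : forall h, h \in Sp -> loopless G h.
Proof.
have [sS _ _ _ _] := VtauP VST.
by move=> h; rewrite !inE => /orP[/andP[_ /(lsub sS) //]|/orP[/eqP->|/eqP->]]; exact: loopG.
Qed.

Lemma lTp : forall h, h \in Tp -> loopless G h.
Proof.
have [_ sT _ _ _] := VtauP VST.
by move=> h; rewrite !inE => /orP[/(lsub sT) //|/eqP->]; exact: loopG.
Qed.

Section Core3.
Variable e : E.
Hypotheses (eT : e \in T) (ee : e != eab).

Lemma eH : e \in gE H.
Proof. by have [_ sT _ _ _] := VtauP VST; apply: (subsetP sT). Qed.

Lemma eNS : e \notin S.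
Proof. by have [_ _ _ _ [dj _]] := VtauP VST; apply/negP => /dj; rewrite eT. Qed.

Lemma e_ea : e != ea. Proof. by apply: contraNneq eaH => E1; move: eH; rewrite E1. Qed.
Lemma e_eb : e != eb. Proof. by apply: contraNneq ebH => E1; move: eH; rewrite E1. Qed.
Lemma e_ec : e != ec. Proof. by apply: contraNneq ecH => E1; move: eH; rewrite E1. Qed.

Lemma eNSp : e \notin Sp.
Proof. by rewrite !inE negb_or negb_and eNS orbT /= negb_or e_ea e_eb. Qed.

Lemma n1 : gs G e != v. Proof. by case: (nv_of (nvH eH)). Qed.
Lemma n2 : gt G e != v. Proof. by case: (nv_of (nvH eH)). Qed.

Lemma connSe : conn G S (gs G e) (gt G e).
Proof.
have [_ _ cST _ _] := VtauP VST; have [h1 h2] := endsH eH.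
by case: (cST _ _ h1 h2).
Qed.

Lemma connSpe : conn G Sp (gs G e) (gt G e).
Proof. have [sS _ _ _ _] := VtauP VST. by rewrite (transB' (nvsub sS) eS n1 n2) connSe. Qed.

Lemma cycS g : g != ea -> g != eb -> g != eab -> (g \in Cyc G Sp e) = (g \in Cyc G S e).
Proof.
move=> ga gb gab.
have [sS sT cST [aS aT] [dj U]] := VtauP VST.
have [aSp _] := VtauG_acyc (VtauS VST eS).
rewrite (cyc_char _ aSp eNSp (loopH eH) lSp) (cyc_char _ aS eNS (loopH eH) (lsub sS)).
rewrite connSpe connSe.
have -> : (g \in Sp :|: [set e]) = (g \in S :|: [set e]) by rewrite !inE gab (negbTE ga) (negbTE gb) /= ?orbF.
case: (eqVneq g e) => [->|ge]; first by [].
case gS: (g \in S); last by rewrite in_setU in_set1 gS ?(negbTE ge).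
have ehS : eab \in S :\ g by rewrite !inE eS andbT eq_sym.
by rewrite setSD // (transB' (nvD (h:=g) (nvsub sS)) ehS n1 n2).
Qed.

Lemma cycSa : (ea \in Cyc G Sp e) = (eab \in Cyc G S e).
Proof.
have [sS sT cST [aS aT] [dj U]] := VtauP VST.
have [aSp _] := VtauG_acyc (VtauS VST eS).
have [aS' _] := notST eaH.
rewrite (cyc_char _ aSp eNSp (loopH eH) lSp) (cyc_char _ aS eNS (loopH eH) (lsub sS)).
have h1 : ea != e by rewrite eq_sym e_ea.
have h2 : eab != e by rewrite eq_sym.
rewrite connSpe connSe !inE eqxx eS /= orbT h1 h2 /=.
by rewrite setSDa // (transA' (nvD (h:=eab) (nvsub sS)) Jb vb n1 n2).
Qed.

Lemma cycSb : (eb \in Cyc G Sp e) = (eab \in Cyc G S e).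
Proof.
have [sS sT cST [aS aT] [dj U]] := VtauP VST.
have [aSp _] := VtauG_acyc (VtauS VST eS).
have [bS' _] := notST ebH.
rewrite (cyc_char _ aSp eNSp (loopH eH) lSp) (cyc_char _ aS eNS (loopH eH) (lsub sS)).
have h1 : eb != e by rewrite eq_sym e_eb.
have h2 : eab != e by rewrite eq_sym.
rewrite connSpe connSe !inE eqxx eS /= !orbT h1 h2 /=.
by rewrite setSDb // (transA' (nvD (h:=eab) (nvsub sS)) Ja va n1 n2).
Qed.


Lemma fv_v w0 : fv w0 v = w0.
Proof. by rewrite /fv eqxx. Qed.

Local Notation sideT x := (conn G (T :\ e) (gs G e) x).

Lemma connTg x : x \in gV H -> conn G T (gs G e) x.
Proof.
have [_ _ cST _ _] := VtauP VST; have [h1 _] := endsH eH.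
by move=> xV; case: (cST _ _ h1 xV).
Qed.

Lemma connSg x : x \in gV H -> conn G S (gs G eab) x.
Proof.
have [_ _ cST _ _] := VtauP VST.
by move=> xV; rewrite Hs; case: (cST _ _ aH xV).
Qed.

Lemma dcutTw ew w : ew \in gE G -> joins G ew v w -> w \in gV H -> w != v ->
  (ew \in Dcut G Tp e) = (sideT c != sideT w).
Proof.
move=> ewG jw wV wv.
have [sS sT cST [aS aT] [dj U]] := VtauP VST.
rewrite inDcut ewG /= setTD ?e_ec // !(transA (nvD (h:=e) (nvsub sT)) Jc vc).
rewrite !(fv_id c n1) !(fv_id c n2).
have sD := side_D aT eT (loopH eH) (connTg cH) (connTg wV).
case/joinsP: jw => -[-> ->]; rewrite fv_v (fv_id c wv); first by rewrite sD.
by rewrite orbC sD.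
Qed.

Lemma cycTpw ew w : ew \in gE G -> ew \notin gE H -> ew != ec -> joins G ew v w ->
  w \in gV H -> w != v -> (e \in Cyc G Tp ew) = (sideT c != sideT w).
Proof.
move=> ewG ewH ewc jw wV wv.
have [sS sT cST [aS aT] [dj U]] := VtauP VST.
have [_ aTp] := VtauG_acyc (VtauS VST eS).
have [_ ewT] := notST ewH.
have ewTp : ew \notin Tp by rewrite !inE negb_or ewT ewc.
have e_ew : e != ew by apply: contraNneq ewH => E1; move: eH; rewrite E1.
rewrite (cyc_char _ aTp ewTp (loopG ewG) lTp) !inE eT /= e_ew /=.
rewrite setTD ?e_ec // !(transA (nvD (h:=e) (nvsub sT)) Jc vc) (transA (nvsub sT) Jc vc).
have sN := side_N aT eT (loopH eH) (connTg cH) (connTg wV).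
have cTcw : conn G T c w by case: (cST _ _ cH wV).
case/joinsP: jw => -[-> ->]; rewrite fv_v (fv_id c wv).
  by rewrite cTcw sN.
by rewrite conn_sym cTcw conn_sym sN eq_sym.
Qed.

Lemma dcutTab : (eab \in Dcut H T e) = (sideT a != sideT b).
Proof.
have [sS sT cST [aS aT] [dj U]] := VtauP VST.
have eabH : eab \in gE H by rewrite !inE eqxx orbT.
rewrite inDcut eabH /=.
change (((sideT (gs G eab) && conn G (T :\ e) (gt G e) (gt G eab))
  || (sideT (gt G eab) && conn G (T :\ e) (gt G e) (gs G eab))) = (sideT a != sideT b)).
by rewrite Hs Ht (side_D aT eT (loopH eH) (connTg aH) (connTg bH)).
Qed.

Lemma tripleE : (e \in Dcut H S eab :&: Cyc G Tp ea :&: Cyc G Tp eb) =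
  [&& eab \in Cyc G S e, sideT c != sideT a & sideT c != sideT b].
Proof.
have [sS sT cST [aS aT] [dj U]] := VtauP VST.
rewrite !in_setI (cycTpw Hea eaH Nac Ja aH va) (cycTpw Heb ebH Nbc Jb bH vb) -andbA.
congr (_ && _).
have [h1 h2] := endsH eH.
rewrite inDcut eH /=.
change (((conn G (S :\ eab) (gs G eab) (gs G e) && conn G (S :\ eab) (gt G eab) (gt G e))
  || (conn G (S :\ eab) (gs G eab) (gt G e) && conn G (S :\ eab) (gt G eab) (gs G e)))
  = (eab \in Cyc G S e)).
rewrite (side_D aS eS (loopH (subsetP sS _ eS)) (connSg h1) (connSg h2)).
rewrite (cyc_char _ aS eNS (loopH eH) (lsub sS)) !inE eS /= connSe /=.
have h3 : eab != e by rewrite eq_sym.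
by rewrite h3 /= (side_N aS eS (loopH (subsetP sS _ eS)) (connSg h1) (connSg h2)).
Qed.


Lemma UT_X_gen g : g != ea -> g != eb -> g != eab ->
  (g \in Dcut G Tp e :&: Cyc G Sp e) = (g \in Dcut H T e :&: Cyc G S e).
Proof.
move=> ga gb gab.
have [sS sT cST [aS aT] [dj U]] := VtauP VST.
rewrite !in_setI (cycS ga gb gab).
case gC: (g \in Cyc G S e); rewrite ?andbF ?andbT //.
have gSe := cyc_sub gC.
have gH : g \in gE H by move: gSe; rewrite in_setU in_set1 => /orP[/(subsetP sS) //|/eqP->]; exact: eH.
have [m1 m2] := nv_of (nvH gH).
rewrite !inDcut (gHG gH gab) gH setTD ?e_ec //.
have m3 := n1; have m4 := n2. by rewrite !(transA' (nvD (h:=e) (nvsub sT)) Jc vc).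
Qed.

Lemma UT_eq f : f \in S -> f != eab ->
  (Dcut G Tp e :&: Cyc G Sp e == [set e; f]) =
  (Dcut H T e :&: Cyc G S e == [set e; f]) &&
  (e \notin Dcut H S eab :&: Cyc G Tp ea :&: Cyc G Tp eb).
Proof.
move=> fS fe.
have [sS sT cST [aS aT] [dj U]] := VtauP VST.
have fH := subsetP sS _ fS.
have f_ea : f != ea by apply: contraNneq eaH => E1; move: fH; rewrite E1.
have f_eb : f != eb by apply: contraNneq ebH => E1; move: fH; rewrite E1.
have n_a : ea \notin [set e; f] by rewrite !inE negb_or ![ea == _]eq_sym e_ea f_ea.
have n_b : eb \notin [set e; f] by rewrite !inE negb_or ![eb == _]eq_sym e_eb f_eb.
have n_ab : eab \notin [set e; f] by rewrite !inE negb_or ![eab == _]eq_sym ee fe.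
rewrite !(set_eq_split _ n_a n_b n_ab).
have -> : [forall g, (g != ea) && (g != eb) && (g != eab) ==>
            ((g \in Dcut G Tp e :&: Cyc G Sp e) == (g \in [set e; f]))] =
          [forall g, (g != ea) && (g != eb) && (g != eab) ==>
            ((g \in Dcut H T e :&: Cyc G S e) == (g \in [set e; f]))].
  apply: eq_forallb => g.
  case: (boolP ((g != ea) && (g != eb) && (g != eab))) => //= /andP[/andP[ga gb] gab].
  by rewrite UT_X_gen.
have eabX : eab \notin Dcut G Tp e :&: Cyc G Sp e by rewrite in_setI inDcut (negbTE Heab).
have eaY : ea \notin Dcut H T e :&: Cyc G S e by rewrite in_setI inDcut (negbTE eaH).
have ebY : eb \notin Dcut H T e :&: Cyc G S e by rewrite in_setI inDcut (negbTE ebH).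
rewrite eabX eaY ebY tripleE !in_setI (dcutTw Hea Ja aH va) (dcutTw Heb Jb bH vb) cycSa cycSb dcutTab.
case: [forall g, _]; case: (eab \in Cyc G S e);
case: (conn G (T :\ e) (gs G e) a); case: (conn G (T :\ e) (gs G e) b);
case: (conn G (T :\ e) (gs G e) c); by [].
Qed.

End Core3.


Lemma arc_core e f : e \in gE H -> f \in gE H -> e != eab -> f != eab ->
  arc G e f Sp Tp = uniqS_exch H S T e f ||
    (uniqT_exch H S T e f && (e \notin Dcut H S eab :&: Cyc G Tp ea :&: Cyc G Tp eb)).
Proof.
move=> eH' fH ee fe.
have [sS sT cST [aS aT] [dj U]] := VtauP VST.
have x1 : forall g, g \in gE H -> g != eab -> (g \in Sp) = (g \in S).
  move=> g gH ge; rewrite !inE ge /=.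
  have ga : g != ea by apply: contraNneq eaH => E1; move: gH; rewrite E1.
  have gb : g != eb by apply: contraNneq ebH => E1; move: gH; rewrite E1.
  by rewrite (negbTE ga) (negbTE gb) /= orbF.
have x2 : forall g, g \in gE H -> (g \in Tp) = (g \in T).
  move=> g gH; rewrite !inE.
  have gc : g != ec by apply: contraNneq ecH => E1; move: gH; rewrite E1.
  by rewrite (negbTE gc) orbF.
rewrite /arc (VtauS VST eS) /= /uniqS_exch /uniqT_exch (x1 _ eH' ee) (x1 _ fH fe) !x2 //.
case eS': (e \in S).
  have eT' : (e \in T) = false by apply/negbTE/dj.
  rewrite eT' /= !orbF.
  case fT: (f \in T) => //=.
  by rewrite US_eq.
case eT': (e \in T) => //=.
case fS: (f \in S) => //=.
by rewrite (UT_eq eT' ee fS fe).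
Qed.

Lemma triple_T e : e \in gE H -> e \in Dcut H S eab :&: Cyc G Tp ea :&: Cyc G Tp eb -> e \in T.
Proof.
move=> eH'; rewrite !in_setI => /andP[/andP[_ /cyc_sub]]; rewrite !inE => /orP[/orP[//|/eqP E1] | /eqP E1] _.
  by move: eH'; rewrite E1 (negbTE ecH).
by move: eH'; rewrite E1 (negbTE eaH).
Qed.

End Core2.


Lemma arc_in e f S T : arc H e f S T -> e \in gE H /\ f \in gE H.
Proof.
case/andP => VST; have [sS sT _ _ _] := VtauP VST.
case/orP => /and3P[e1 f1 _]; split; [exact: (subsetP sS) | exact: (subsetP sT) | exact: (subsetP sT) | exact: (subsetP sS)].
Qed.

Lemma key S T e f : Vtau H S T -> e \in gE H -> f \in gE H -> e != eab -> f != eab ->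
  arcP G e f (rho eab ea eb ec S T) =
  if eab \in S then uniqS_exch H S T e f ||
    (uniqT_exch H S T e f &&
      (e \notin Dcut H S eab :&: Cyc G (T :|: [set ec]) ea :&: Cyc G (T :|: [set ec]) eb))
  else uniqT_exch H S T e f ||
    (uniqS_exch H S T e f &&
      (e \notin Dcut H T eab :&: Cyc G (S :|: [set ec]) ea :&: Cyc G (S :|: [set ec]) eb)).
Proof.
move=> VST eH' fH ee fe; rewrite /arcP /rho.
case eS: (eab \in S) => /=; first exact: arc_core.
have [_ _ _ _ [_ U]] := VtauP VST.
have eT : eab \in T by move: (U eab); rewrite !inE eqxx orbT eS /= => <-.
have VTS : Vtau H T S by rewrite Vtau_sym.
by rewrite arc_sym (arc_core VTS eT eH' fH ee fe).
Qed.

Lemma main_core :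
  (forall e f S T, e != eab -> f != eab -> arc H e f S T ->
     (eab \in S /\ e \notin Dcut H S eab :&: Cyc G (T :|: [set ec]) ea :&: Cyc G (T :|: [set ec]) eb) \/
     (eab \in T /\ e \notin Dcut H T eab :&: Cyc G (S :|: [set ec]) ea :&: Cyc G (S :|: [set ec]) eb) ->
     arcP G e f (rho eab ea eb ec S T)) /\
  (forall S T, Vtau H S T -> forall e f, e \in gE H -> f \in gE H -> e != eab -> f != eab ->
     (~~ arc H e f S T \/ (arc H e f S T /\
        ~ (eab \in S /\ e \notin Dcut H S eab :&: Cyc G (T :|: [set ec]) ea :&: Cyc G (T :|: [set ec]) eb) /\
        ~ (eab \in T /\ e \notin Dcut H T eab :&: Cyc G (S :|: [set ec]) ea :&: Cyc G (S :|: [set ec]) eb))) ->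
     ~~ arcP G e f (rho eab ea eb ec S T)).
Proof.
split.
  move=> e f S T ee fe A C.
  have [eH' fH] := arc_in A.
  move: (A) => /andP[VST U1].
  have [_ _ _ _ [dj _]] := VtauP VST.
  rewrite (key VST eH' fH ee fe).
  case: C => -[eX nt].
    by rewrite eX nt andbT.
  have eS : (eab \in S) = false by apply/negbTE/negP => /dj; rewrite eX.
  by rewrite eS nt andbT orbC.
move=> S T VST e f eH' fH ee fe C.
have [_ _ _ _ [dj U]] := VtauP VST.
rewrite (key VST eH' fH ee fe).
case: C => [nA | [A [n1' n2']]].
  move: nA; rewrite /arc VST /=.
  by case: (eab \in S); case: (uniqS_exch H S T e f); case: (uniqT_exch H S T e f).
case eS: (eab \in S).
  have tr : e \in Dcut H S eab :&: Cyc G (T :|: [set ec]) ea :&: Cyc G (T :|: [set ec]) eb.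
    by apply/negPn/negP => nt; apply: n1'.
  have eT := triple_T eH' tr.
  rewrite tr andbF orbF; apply/negP => /and3P[eS' _ _].
  by move: (dj _ eS'); rewrite eT.
have eT : eab \in T by move: (U eab); rewrite !inE eqxx orbT eS /= => <-.
have tr : e \in Dcut H T eab :&: Cyc G (S :|: [set ec]) ea :&: Cyc G (S :|: [set ec]) eb.
  by apply/negPn/negP => nt; apply: n2'.
have VTS : Vtau H T S by rewrite Vtau_sym.
have eS' := triple_T eH' tr.
rewrite tr andbF orbF; apply/negP => /and3P[eT' _ _].
by move: (dj _ eS'); rewrite eT'.
Qed.

End Core.


Lemma conn_set0 (V E : finType) (K : mgraph V E) x y : conn K set0 x y -> x = y.
Proof.
move/connectP => [[|z p] /= pth ->] //.
by move: pth => /andP[/existsP[h /andP[]]]; rewrite inE.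
Qed.

Lemma card3 (E : finType) (x y z : E) : #|[set x; y; z]| = 3 -> [/\ x != y, x != z & y != z].
Proof.
rewrite -setUA cardsU1 cards2 !inE.
by case: (x == y); case: (x == z); case: (y == z).
Qed.

Lemma atomic_distinct (V E : finType) (G : mgraph V E) v w p q r :
  is_graph G -> atomic G -> p \in gE G -> q \in gE G -> r \in gE G ->
  r != p -> r != q -> p != q -> joins G p v w -> joins G q v w -> False.
Proof.
move=> HG [_ Hat] pG qG rG rp rq pq jp jq.
have [wv wV] := jne HG pG jp.
have vw : v != w by rewrite eq_sym.
have vV : v \in gV G.
  case/and3P: HG => _ /forallP L _; move: (L p); rewrite pG /=.
  by case/joinsP: jp => -[-> ->] /andP[].
have lp := loopG HG pG; have lq := loopG HG qG.
pose K := MGraph [set v; w] [set p; q] (gs G) (gt G).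
have ends : forall g, g \in [set p; q] -> gs G g \in [set v; w] /\ gt G g \in [set v; w].
  move=> g; rewrite !inE => /orP[/eqP->|/eqP->];
    [case/joinsP: jp | case/joinsP: jq] => -[-> ->]; by rewrite !eqxx ?orbT.
have s1 : [set v; w] \subset gV G by apply/subsetP => x; rewrite !inE => /orP[/eqP->|/eqP->].
have s2 : [set p; q] \subset gE G by apply/subsetP => x; rewrite !inE => /orP[/eqP->|/eqP->].
have ig : is_graph K.
  apply/and3P; split.
  + by apply/set0Pn; exists v; rewrite !inE eqxx.
  + by apply/forallP => g; apply/implyP => /ends [-> ->].
  + apply/forallP => g; apply/implyP; rewrite !inE => /orP[/eqP->|/eqP->]; assumption.
have bs : bispanning K.
  apply/existsP; exists [set p]; apply/existsP; exists [set q].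
  have span : forall g, g \in [set p; q] -> joins G g v w -> spanning_tree K [set g].
    move=> g gK jg; apply/and3P; split.
    + by rewrite sub1set.
    + have c1 : conn G [set g] v w by apply: conn_edge (set11 g) jg.
      apply/forallP => x; apply/implyP; rewrite !inE => /orP[/eqP->|/eqP->];
      apply/forallP => y; apply/implyP; rewrite !inE => /orP[/eqP->|/eqP->];
      first [exact: connect0 | exact: c1 | rewrite conn_sym; exact: c1].
    + apply: acyc_of_bridges => h; rewrite inE => /eqP->.
        by move: gK; rewrite !inE => /orP[/eqP->|/eqP->].
      rewrite setDv; apply/negP => /conn_set0 E1.
      by move: gK; rewrite !inE => /orP[/eqP E2|/eqP E2]; [move: lp|move: lq];
        rewrite /loopless -E2 /= E1 eqxx.
  apply/and4P; split.
  + by apply: span jp; rewrite !inE eqxx.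
  + by apply: span jq; rewrite !inE eqxx orbT.
  + by rewrite disjoints1 inE.
  + by [].
by case: (Hat _ _ s1 s2 ig bs) => [[_ EE]|C1]; [move: rG; rewrite -EE !inE (negbTE rp) (negbTE rq) |
    move: C1; rewrite cards2 (negbTE vw)].
Qed.

Lemma finish (V E : finType) (G : mgraph V E) (v : V) (ex ey ez : E) (a b c : V) (ea eb ec eab : E) :
  is_graph G -> atomic G ->
  ea \in gE G -> eb \in gE G -> ec \in gE G ->
  joins G ea v a -> joins G eb v b -> joins G ec v c ->
  ea != eb -> ea != ec -> eb != ec ->
  [set g in gE G | incident G g v] = [set ea; eb; ec] ->
  [set ex; ey; ez] = [set ea; eb; ec] ->
  eab \notin gE G -> gs G eab = a -> gt G eab = b ->
  let Gab := reduction G v ex ey ez eab in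
  let cond1 (S T : {set E}) (e : E) :=
    eab \in S /\
    e \notin Dcut Gab S eab :&: Cyc G (T :|: [set ec]) ea
                            :&: Cyc G (T :|: [set ec]) eb in
  let cond2 (S T : {set E}) (e : E) :=
    eab \in T /\
    e \notin Dcut Gab T eab :&: Cyc G (S :|: [set ec]) ea
                            :&: Cyc G (S :|: [set ec]) eb in
  (forall (e f : E) (S T : {set E}),
      e != eab -> f != eab -> arc Gab e f S T ->
      cond1 S T e \/ cond2 S T e ->
      arcP G e f (rho eab ea eb ec S T))
  /\
  (forall (S T : {set E}), Vtau Gab S T ->
   forall e f : E, e \in gE Gab -> f \in gE Gab -> e != eab -> f != eab ->
      (~~ arc Gab e f S T \/
       (arc Gab e f S T /\ ~ cond1 S T e /\ ~ cond2 S T e)) ->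
      ~~ arcP G e f (rho eab ea eb ec S T)).
Proof.
move=> HG At Hea Heb Hec Ja Jb Jc Nab Nac Nbc Hinc Hset Heab Hs Ht Gab cond1 cond2.
have Hab : a != b.
  apply/negP => /eqP ab; rewrite ab in Ja.
  by apply: (atomic_distinct HG At Hea Heb Hec _ _ Nab Ja Jb); rewrite eq_sym.
rewrite /cond1 /cond2 /Gab /reduction Hset.
exact: (main_core HG Hea Heb Hec Ja Jb Jc Hinc Nab Nac Nbc Hab Heab Hs Ht).
Qed.

Theorem mainTheorem14 (V E : finType) (G : mgraph V E)
    (v x y z : V) (ex ey ez : E) (a b c : V) (ea eb ec eab : E) :
  is_graph G -> atomic G ->
  v \in gV G ->
  ex \in gE G -> ey \in gE G -> ez \in gE G ->
  joins G ex v x -> joins G ey v y -> joins G ez v z ->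
  #|[set ex; ey; ez]| = 3 ->
  [set g in gE G | incident G g v] = [set ex; ey; ez] ->
  (([/\ a = x, b = y & c = z] /\ [/\ ea = ex, eb = ey & ec = ez]) \/
   ([/\ a = x, b = z & c = y] /\ [/\ ea = ex, eb = ez & ec = ey]) \/
   ([/\ a = y, b = z & c = x] /\ [/\ ea = ey, eb = ez & ec = ex])) ->
  eab \notin gE G -> gs G eab = a -> gt G eab = b ->
  let Gab := reduction G v ex ey ez eab in
  let cond1 (S T : {set E}) (e : E) :=
    eab \in S /\
    e \notin Dcut Gab S eab :&: Cyc G (T :|: [set ec]) ea
                            :&: Cyc G (T :|: [set ec]) eb in
  let cond2 (S T : {set E}) (e : E) :=
    eab \in T /\
    e \notin Dcut Gab T eab :&: Cyc G (S :|: [set ec]) ea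
                            :&: Cyc G (S :|: [set ec]) eb in
  (forall (e f : E) (S T : {set E}),
      e != eab -> f != eab -> arc Gab e f S T ->
      cond1 S T e \/ cond2 S T e ->
      arcP G e f (rho eab ea eb ec S T))
  /\
  (forall (S T : {set E}), Vtau Gab S T ->
   forall e f : E, e \in gE Gab -> f \in gE Gab -> e != eab -> f != eab ->
      (~~ arc Gab e f S T \/
       (arc Gab e f S T /\ ~ cond1 S T e /\ ~ cond2 S T e)) ->
      ~~ arcP G e f (rho eab ea eb ec S T)).
Proof.
move=> HG At Hv Hex Hey Hez Jx Jy Jz Hcard Hinc Hcase Heab Hs Ht.
have [dxy dxz dyz] := card3 Hcard.
have P1 : [set ex; ez; ey] = [set ex; ey; ez].
  by apply/setP => g; rewrite !inE; case: (g == ex); case: (g == ey); case: (g == ez).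
have P2 : [set ey; ez; ex] = [set ex; ey; ez].
  by apply/setP => g; rewrite !inE; case: (g == ex); case: (g == ey); case: (g == ez).
case: Hcase => [[[Ea Eb Ec] [E1 E2 E3]]|[[[Ea Eb Ec] [E1 E2 E3]]|[[Ea Eb Ec] [E1 E2 E3]]]];
  rewrite E1 E2 E3; rewrite Ea in Hs; rewrite Eb in Ht.
- exact: (@finish V E G v ex ey ez x y z ex ey ez eab HG At Hex Hey Hez Jx Jy Jz
          dxy dxz dyz Hinc erefl Heab Hs Ht).
- have Hinc' : [set g in gE G | incident G g v] = [set ex; ez; ey] by rewrite P1.
  have d3 : ez != ey by rewrite eq_sym.
  exact: (@finish V E G v ex ey ez x z y ex ez ey eab HG At Hex Hez Hey Jx Jz Jy
          dxz dxy d3 Hinc' (esym P1) Heab Hs Ht).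
- have Hinc' : [set g in gE G | incident G g v] = [set ey; ez; ex] by rewrite P2.
  have d1 : ey != ex by rewrite eq_sym.
  have d2 : ez != ex by rewrite eq_sym.
  exact: (@finish V E G v ex ey ez y z x ey ez ex eab HG At Hey Hez Hex Jy Jz Jx
          dyz d1 d2 Hinc' (esym P2) Heab Hs Ht).
Qed.
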